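(* Let $p(x)=\sum_k a_{2k}x^{2k}\in\mathbb{Q}[x]$ have only even powers of $x$. Let $R=\mathbb{Q}[x_a,x_b,x_c,x_d]/(x_a+x_b-x_c-x_d)$, $w=p(x_c)+p(x_d)-p(x_a)-p(x_b)$, and let $\bar\cdot:R\to R$ be the ring homomorphism with $\bar x_a=-x_b$, $\bar x_b=-x_a$, $\bar x_c=-x_d$, $\bar x_d=-x_c$; applying it to the entries of maps induces an endofunctor $\bar\cdot$ of $\mathrm{hmf}_2$ which is the identity on objects and an involution on morphisms. Let $\mathcal F$ be the grading shift functor $\{2\}$ and $\mathcal G$ the identity functor on $\mathrm{hmf}_2$, and let $f:\mathcal F\to\mathcal G$ be the natural transformation given on each object by multiplication by $x_a+x_b$. Then there is an operation $\partial:\mathrm{Hom}_{\mathrm{hmf}_2}(A,B)\to\mathrm{Hom}_{\mathrm{hmf}_2}(\mathcal G A,\mathcal F B)$ such that $\mathcal C=\mathrm{hmf}_2$, $\mathcal F,\mathcal G,\bar\cdot,f,\partial$ satisfy: (1) $\partial$ is $\mathbb{Z}$-linear; (2) $\mathcal G(\phi-\bar\phi)=f_B\,\partial\phi$ and $\mathcal F(\phi-\bar\phi)=\partial\phi\,f_A$ for all $\phi\in\mathrm{Hom}(A,B)$; (3) $\partial(\psi\phi)=\partial\psi\,\mathcal G\phi+\mathcal F\bar\psi\,\partial\phi=\partial\psi\,\mathcal G\bar\phi+\mathcal F\psi\,\partial\phi$ for composable $\phi,\psi$.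
   Context: Matrix factorizations over a graded commutative $\mathbb{Q}$-algebra $R$ with homogeneous potential $w$: free graded $C=C^0\oplus C^1$ with $d^0:C^0\to C^1$, $d^1:C^1\to C^0$ of $q$-degree $\deg(w)/2$, $d^1d^0=w=d^0d^1$; $\mathrm{hmf}_w(R)$ is the homotopy category (degree-0 morphisms modulo homotopy); $\{k\}$ is a $q$-shift (if $p$ is not homogeneous, $q$-gradings are ignored). For $uv=w$, $K(u;v)$ has $C^0=R$, $C^1=R\{(\deg v-\deg u)/2\}$, $d^0=u$, $d^1=v$. With $n+1=\deg p$, $v_1=x_c-x_a$, $v_2=(x_c-x_a)(x_c-x_b)$, set $C_p(D_r)=K(w/v_1;v_1)\{n-1\}$ and $C_p(D_s)=K(w/v_2;v_2)\{-1\}$ (the complexes of an oriented smoothing and a singular crossing). $\mathrm{hmf}_2$ is the full subcategory of $\mathrm{hmf}_w(R)$ whose objects are finite direct sums of shifts (in $q$-grading and $\mathbb{Z}/2$-grading) of $C_p(D_r)$ and $C_p(D_s)$. *)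

(* Defs.v *)
From HB Require Import structures.
From mathcomp Require Import all_boot all_order all_algebra.
From mathcomp Require Import finmap.
From mathcomp Require Export mpoly.
Set Implicit Arguments. Unset Strict Implicit. Unset Printing Implicit Defensive.
Import Order.TTheory GRing.Theory Num.Theory.
Local Open Scope ring_scope.

(* R = Q[x_a,x_b,x_c,x_d]/(x_a+x_b-x_c-x_d) is presented as Q[x_a,x_b,x_c]
   with x_d := x_a + x_b - x_c (a graded ring isomorphism, deg x = 2). *)
Notation Rg := {mpoly rat[3]}.

Definition xa : Rg := 'X_(Ordinal (isT : (0 < 3)%N)).
Definition xb : Rg := 'X_(Ordinal (isT : (1 < 3)%N)).
Definition xc : Rg := 'X_(Ordinal (isT : (2 < 3)%N)).
Definition xd : Rg := xa + xb - xc.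

Definition bar (r : Rg) : Rg := r \mPo [tuple - xb; - xa; - xd].

(* q-grading: deg x_a = deg x_b = deg x_c = 2; r is homogeneous of q-degree e
   (0 is homogeneous of every degree) *)
Definition qhom (e : int) (r : Rg) : Prop :=
  forall m, m \in msupp r -> ((2 * mdeg m)%N)%:Z = e.

(* a summand of an object of hmf_2:
   (kind, q, z) = C_p(D_r){q} (kind = false) or C_p(D_s){q} (kind = true),
   shifted by [1] in the Z/2-grading iff z = true. *)
Definition summand := (bool * int * bool)%type.
Definition skind (s : summand) : bool := s.1.1.
Definition sq (s : summand) : int := s.1.2.
Definition sz (s : summand) : bool := s.2.

(* objects of hmf_2: finite direct sums of shifted C_p(D_r), C_p(D_s) *)
Record obj := Obj { osize : nat; osumm : 'I_osize -> summand }.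

Definition shift2 (A : obj) : obj :=
  @Obj (osize A) (fun i : 'I_(osize A) =>
         (skind (@osumm A i), sq (@osumm A i) + 2, sz (@osumm A i))).

(* degree-0 (in Z/2) maps between direct sums: a pair (f^0, f^1) of matrices *)
Definition mor (A B : obj) := ('M[Rg]_(osize B, osize A) * 'M[Rg]_(osize B, osize A))%type.

Definition mcomp (A B C : obj) (g : mor B C) (f : mor A B) : mor A C :=
  (g.1 *m f.1, g.2 *m f.2).
Definition madd (A B : obj) (f g : mor A B) : mor A B := (f.1 + g.1, f.2 + g.2).
Definition msub (A B : obj) (f g : mor A B) : mor A B := (f.1 - g.1, f.2 - g.2).
Definition mbar (A B : obj) (f : mor A B) : mor A B := (map_mx bar f.1, map_mx bar f.2).
Definition Fm (A B : obj) (f : mor A B) : mor (shift2 A) (shift2 B) := f.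
Definition fnat (A : obj) : mor (shift2 A) A := ((xa + xb)%:M, (xa + xb)%:M).

Section MF.
Variable p : {poly rat}.
(* u1 = w / v1 and u2 = w / v2 (given with their defining equations) *)
Variables u1 u2 : Rg.

Definition peval (r : Rg) : Rg := (map_poly (fun c : rat => c%:MP) p).[r].
Definition w : Rg := peval xc + peval xd - peval xa - peval xb.
Definition v1 : Rg := xc - xa.
Definition v2 : Rg := (xc - xa) * (xc - xb).

(* p homogeneous (then the q-grading is used; otherwise it is ignored) *)
Definition phom : bool := (p != 0) && (p == lead_coef p *: ('X ^+ (size p).-1 : {poly rat})).
(* n with n + 1 = deg p *)
Definition nn : int := (size p)%:Z - 2.

(* differentials of a summand: K(u;v) has d^0 = u, d^1 = v; the Z/2-shift
   [1] swaps components and negates the differentials *)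
Definition sd0 (s : summand) : Rg :=
  let u := if skind s then u2 else u1 in
  let v := if skind s then v2 else v1 in
  if sz s then - v else u.
Definition sd1 (s : summand) : Rg :=
  let u := if skind s then u2 else u1 in
  let v := if skind s then v2 else v1 in
  if sz s then - u else v.

(* q-degrees of the generators of C^0 and C^1 of a summand:
   C_p(D_r){q} = K(w/v1;v1){n-1+q}: C^0 gen. in degree n-1+q, C^1 in degree q;
   C_p(D_s){q} = K(w/v2;v2){-1+q}: C^0 gen. in degree q-1, C^1 in degree 2-n+q *)
Definition g0u (s : summand) : int := if skind s then sq s - 1 else sq s + nn - 1.
Definition g1u (s : summand) : int := if skind s then sq s + 2 - nn else sq s.
Definition sg0 (s : summand) : int := if sz s then g1u s else g0u s.
Definition sg1 (s : summand) : int := if sz s then g0u s else g1u s.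

Definition D0 (A : obj) : 'M[Rg]_(osize A) := diag_mx (\row_i sd0 (@osumm A i)).
Definition D1 (A : obj) : 'M[Rg]_(osize A) := diag_mx (\row_i sd1 (@osumm A i)).

Definition graded (m n : nat) (deg : 'I_m -> 'I_n -> int) (M : 'M[Rg]_(m, n)) : Prop :=
  phom -> forall i j, qhom (deg i j) (M i j).

Definition is_mor (A B : obj) (f : mor A B) : Prop :=
  [/\ D0 B *m f.1 = f.2 *m D0 A,
      D1 B *m f.2 = f.1 *m D1 A,
      graded (fun i j => sg0 (@osumm A j) - sg0 (@osumm B i)) f.1 &
      graded (fun i j => sg1 (@osumm A j) - sg1 (@osumm B i)) f.2].

(* homotopy (homotopies of Z/2-degree 1 and q-degree -deg(w)/2 = -(n+1)) *)
Definition htpc (A B : obj) (f g : mor A B) : Prop :=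
  exists (h0 h1 : 'M[Rg]_(osize B, osize A)),
    [/\ f.1 - g.1 = D1 B *m h0 + h1 *m D0 A,
        f.2 - g.2 = D0 B *m h1 + h0 *m D1 A,
        graded (fun i j => sg0 (@osumm A j) - sg1 (@osumm B i) - (nn + 1)) h0 &
        graded (fun i j => sg1 (@osumm A j) - sg0 (@osumm B i) - (nn + 1)) h1].

End MF.

(* Main.v *)
Require Import Defs.
From HB Require Import structures.
From mathcomp Require Import all_boot all_order all_algebra.
From mathcomp Require Import finmap mpoly.
From mathcomp Require Import ring.
Set Implicit Arguments. Unset Strict Implicit. Unset Printing Implicit Defensive.
Import Order.TTheory GRing.Theory Num.Theory.
Local Open Scope ring_scope.
Definition tb : 3.-tuple Rg := [tuple - xb; - xa; - xd].
HB.instance Definition _ := GRing.RMorphism.copy bar (comp_mpoly tb).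

Lemma bar_xa : bar xa = - xb. Proof. by rewrite /bar /xa comp_mpolyXU. Qed.
Lemma bar_xb : bar xb = - xa. Proof. by rewrite /bar /xb comp_mpolyXU. Qed.
Lemma bar_xc : bar xc = - xd. Proof. by rewrite /bar /xc comp_mpolyXU. Qed.
Lemma bar_xd : bar xd = - xc.
Proof. rewrite /xd !rmorphB rmorphD /= bar_xa bar_xb bar_xc /xd. ring. Qed.
Lemma barC c : bar c%:MP = c%:MP. Proof. exact: comp_mpolyC. Qed.

Lemma nz_test : xc - xa != 0.
Proof.
apply/negP => /eqP /(congr1 (meval (fun i : 'I_3 => (i : nat)%:R))).
rewrite mevalB !mevalXU meval0 /=.
by [].
Qed.
Definition ev3 : 'I_3 -> rat := fun i => (i : nat)%:R.
Lemma s_nz : xa + xb != 0.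
Proof. apply/negP => /eqP /(congr1 (meval ev3)).
by rewrite mevalD !mevalXU meval0. Qed.
Lemma v1_nz : v1 != 0.
Proof. apply/negP => /eqP /(congr1 (meval ev3)).
by rewrite mevalB !mevalXU meval0. Qed.
Lemma v2_nz : v2 != 0.
Proof. rewrite mulf_eq0 negb_or v1_nz /=. apply/negP => /eqP /(congr1 (meval ev3)).
by rewrite mevalB !mevalXU meval0. Qed.

Section P.
Variable p : {poly rat}.
Hypothesis p_even : forall i : nat, odd i -> p`_i = 0.

Lemma bar_peval r : bar (peval p r) = peval p (bar r).
Proof.
rewrite /peval !horner_coef rmorph_sum /=; apply: eq_bigr => i _.
by rewrite rmorphM rmorphXn /= coef_map_id0 ?barC.
Qed.

Lemma peval_opp r : peval p (- r) = peval p r.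
Proof.
rewrite /peval !horner_coef; apply: eq_bigr => i _.
rewrite coef_map_id0 //; case odd_i: (odd i).
  by rewrite p_even // !mul0r.
by rewrite exprNn -signr_odd odd_i expr0 mul1r.
Qed.

Lemma bar_w : bar (w p) = w p.
Proof.
rewrite /w !rmorphB rmorphD /= !bar_peval bar_xa bar_xb bar_xc bar_xd !peval_opp.
ring.
Qed.

Lemma bar_v1 : bar v1 = v1.
Proof. rewrite /v1 rmorphB /= bar_xa bar_xc /xd. ring. Qed.
Lemma bar_v2 : bar v2 = v2.
Proof. rewrite /v2 rmorphM !rmorphB /= bar_xa bar_xb bar_xc /xd. ring. Qed.

Lemma bar_u (u v : Rg) : v != 0 -> bar v = v -> u * v = w p -> bar u = u.
Proof.
move=> nz bv uv; apply: (mulIf nz); rewrite uv -{1}bv -rmorphM /= uv bar_w //.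
Qed.
End P.

Definition sx : Rg := xa + xb.
Definition dvs (r : Rg) := exists q, r - bar r = sx * q.

Lemma dvsD a b : dvs a -> dvs b -> dvs (a + b).
Proof. move=> [q1 h1] [q2 h2]; exists (q1 + q2).
by rewrite rmorphD /= mulrDr -h1 -h2; ring. Qed.
Lemma dvsM a b : dvs a -> dvs b -> dvs (a * b).
Proof. move=> [q1 h1] [q2 h2]; exists (q1 * b + bar a * q2).
rewrite rmorphM /= mulrDr mulrA -h1 mulrCA -h2; ring. Qed.
Lemma dvsZ c a : dvs a -> dvs (c *: a).
Proof. move=> [q h]; exists (c *: q). have -> : bar (c *: a) = c *: bar a by exact: comp_mpolyZ.
rewrite -scalerBr h.
by rewrite scalerAr. Qed.
Lemma dvs1 : dvs 1.
Proof. by exists 0; rewrite rmorph1 subrr mulr0. Qed.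
Lemma dvsX (i : 'I_3) : dvs 'X_i.
Proof.
exists 1; rewrite mulr1 /sx.
case: i => [[|[|[|//]]] Hi].
- have -> : 'X_(Ordinal Hi) = xa by rewrite /xa (bool_irrelevance Hi isT).
  by rewrite bar_xa opprK.
- have -> : 'X_(Ordinal Hi) = xb by rewrite /xb (bool_irrelevance Hi isT).
  rewrite bar_xb; ring.
- have -> : 'X_(Ordinal Hi) = xc by rewrite /xc (bool_irrelevance Hi isT).
  rewrite bar_xc /xd; ring.
Qed.

Lemma dvs_all r : dvs r.
Proof.
elim/mpolyind: r => [|c m r _ _ hr].
  by exists 0; rewrite rmorph0 subrr mulr0.
apply: dvsD => //; apply: dvsZ.
rewrite mpolyXE_id; apply: (big_ind dvs) => //; [exact: dvs1| exact: dvsM|].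
move=> i _; elim: (m i) => [|k ih]; first by rewrite expr0; exact: dvs1.
by rewrite exprS; apply: dvsM => //; exact: dvsX.
Qed.

Lemma dvs_allb r : exists q, r - bar r == sx * q.
Proof. by have [q h] := dvs_all r; exists q; apply/eqP. Qed.

Definition divs (r : Rg) : Rg := xchoose (dvs_allb r).
Lemma divsP r : sx * divs r = r - bar r.
Proof. by rewrite (eqP (xchooseP (dvs_allb r))). Qed.

Lemma qhom0 e : qhom e 0.
Proof. by move=> m; rewrite msupp0. Qed.

Lemma qhom_homog e r : qhom e r -> r != 0 ->
  exists d, e = ((2 * d)%N)%:Z /\ r \is d.-homog.
Proof.
move=> h nz; have : msupp r != [::] by rewrite msupp_eq0.
case E: (msupp r) => [|m0 s] // _.
have m0in : m0 \in msupp r by rewrite E inE eqxx.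
exists (mdeg m0); split; first by rewrite (h m0 m0in).
apply/dhomogP => m min; have := h m min; rewrite -(h m0 m0in).
by move/eqP; rewrite eqz_nat eqn_pmul2l // => /eqP.
Qed.

Lemma homog_qhom d r : r \is d.-homog -> qhom ((2 * d)%N)%:Z r.
Proof. by move/dhomogP => h m /h ->. Qed.

Lemma X_homog (i : 'I_3) : ('X_i : Rg) \is 1.-homog.
Proof. by rewrite dhomogX; apply/eqP; exact: mdeg1. Qed.

Lemma tb_homog (i : 'I_3) : tnth tb i \is 1.-homog.
Proof.
have hx : forall j : 'I_3, - ('X_j : Rg) \is 1.-homog by move=> j; rewrite dhomogN X_homog.
case: i => [[|[|[|//]]] Hi].
- exact: hx.
- exact: hx.
- rewrite /= /tnth /= dhomogN /xd; apply: dhomogD; first apply: dhomogD.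
  + exact: X_homog.
  + exact: X_homog.
  + by rewrite dhomogN X_homog.
Qed.

Lemma bar_homog d r : r \is d.-homog -> bar r \is d.-homog.
Proof.
move=> hr; rewrite (mpolyE r) rmorph_sum /= big_seq.
apply: (big_ind (fun x : Rg => x \is d.-homog)); [exact: dhomog0| exact: dhomogD|].
move=> m min.
have -> : bar (r@_m *: 'X_[m]) = r@_m *: ('X_[m] \mPo tb) by exact: comp_mpolyZ.
apply: dhomogZ; rewrite comp_mpolyX -(dhomog_mf hr min) /= mdegE.
apply: (big_rec2 (fun (k : nat) (x : Rg) => x \is k.-homog)); first exact: dhomog1.
move=> i k x _ hx; rewrite -[m i]mul1n.
apply: dhomogM => //. by have := dhomogMn (m i) (tb_homog i); rewrite mul1n.
Qed.

Lemma sx_homog : sx \is 1.-homog.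
Proof. by apply: dhomogD; apply: X_homog. Qed.

Lemma sx_nz : sx != 0.
Proof. exact: s_nz. Qed.

Lemma div_homog d q : sx * q \is d.-homog -> q != 0 ->
  exists d', d = d'.+1 /\ q \is d'.-homog.
Proof.
move=> hq nz.
set K := msize q.
have Hq : q = \sum_(k < K) pihomog mdeg k q by apply: pihomog_partitionE.
have C : forall k : 'I_K, sx * pihomog mdeg k q = pihomog mdeg k.+1 (sx * q).
  move=> k.
  have E : sx * q = \sum_(j < K) sx * pihomog mdeg j q by rewrite {1}Hq mulr_sumr.
  rewrite E raddf_sum (bigD1 k) //=.
  rewrite [X in _ = X + _]pihomog_dE; last exact: (dhomogM sx_homog (pihomogP mdeg k q)).
  rewrite big1 ?addr0 // => j /eqP nj; apply: pihomog_ne0 (dhomogM sx_homog (pihomogP _ _ q)).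
  by rewrite add1n eqSS; apply/eqP => /val_inj.
have Z : forall k : 'I_K, k.+1 != d -> pihomog mdeg k q = 0.
  move=> k nk; apply: (mulfI sx_nz); rewrite C mulr0.
  by apply: pihomog_ne0 hq; rewrite eq_sym.
case: d hq Z => [|d'] hq Z.
  by move: nz; rewrite Hq big1 ?eqxx // => k _; apply: Z.
exists d'; split => //; rewrite Hq.
apply: (big_ind (fun x : Rg => x \is d'.-homog)); [exact: dhomog0| exact: dhomogD|].
move=> k _; case: (eqVneq (k : nat) d') => [<-|nk]; first exact: pihomogP.
by rewrite Z ?dhomog0 // eqSS.
Qed.

Lemma divs_qhom e r : qhom e r -> qhom (e - 2) (divs r).
Proof.
move=> h; case: (eqVneq (divs r) 0) => [->|nz]; first exact: qhom0.
have nz2 : r - bar r != 0 by rewrite -divsP mulf_neq0 // sx_nz.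
have nzr : r != 0 by apply: contraNneq nz2 => ->; rewrite rmorph0 subrr.
have [d [-> hd]] := qhom_homog h nzr.
have hdb : sx * divs r \is d.-homog by rewrite divsP dhomogD ?dhomogN ?bar_homog.
have [d' [-> hd']] := div_homog hdb nz.
have -> : ((2 * d'.+1)%N)%:Z - 2 = ((2 * d')%N)%:Z.
  by rewrite mulnS PoszD addrAC subrr add0r.
exact: homog_qhom.
Qed.

Section Mat.
Implicit Types (m n k : nat).

Definition mdiv m n (M : 'M[Rg]_(m, n)) : 'M[Rg]_(m, n) := map_mx divs M.
Definition mb m n (M : 'M[Rg]_(m, n)) : 'M[Rg]_(m, n) := map_mx bar M.

Lemma mdivP m n (M : 'M[Rg]_(m, n)) : sx *: mdiv M = M - mb M.
Proof. by apply/matrixP => i j; rewrite !mxE divsP. Qed.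

Lemma scal_inj m n (X Y : 'M[Rg]_(m, n)) : sx *: X = sx *: Y -> X = Y.
Proof.
move=> h; apply/matrixP => i j; have := congr1 (fun M : 'M[Rg]_(m, n) => M i j) h.
by rewrite !mxE => /(mulfI sx_nz).
Qed.

Lemma mbM m n k (X : 'M[Rg]_(m, n)) (Y : 'M[Rg]_(n, k)) : mb (X *m Y) = mb X *m mb Y.
Proof. exact: map_mxM. Qed.
Lemma mbD m n (X Y : 'M[Rg]_(m, n)) : mb (X + Y) = mb X + mb Y.
Proof. exact: map_mxD. Qed.
Lemma mbB m n (X Y : 'M[Rg]_(m, n)) : mb (X - Y) = mb X - mb Y.
Proof. exact: map_mxB. Qed.

Lemma mdivD m n (X Y : 'M[Rg]_(m, n)) : mdiv (X + Y) = mdiv X + mdiv Y.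
Proof. apply: scal_inj; by rewrite scalerDr !mdivP mbD opprD addrACA. Qed.
Lemma mdivB m n (X Y : 'M[Rg]_(m, n)) : mdiv (X - Y) = mdiv X - mdiv Y.
Proof. apply: scal_inj; by rewrite scalerBr !mdivP mbB !opprD addrACA opprK. Qed.

Lemma mdiv_mull m n k (X : 'M[Rg]_(m, n)) (Y : 'M[Rg]_(n, k)) :
  mb X = X -> mdiv (X *m Y) = X *m mdiv Y.
Proof.
move=> hX; apply: scal_inj; rewrite scalemxAr !mdivP mbM hX mulmxBr //.
Qed.
Lemma mdiv_mulr m n k (X : 'M[Rg]_(m, n)) (Y : 'M[Rg]_(n, k)) :
  mb Y = Y -> mdiv (X *m Y) = mdiv X *m Y.
Proof.
move=> hY; apply: scal_inj; rewrite scalemxAl !mdivP mbM hY mulmxBl //.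
Qed.
Lemma mdivM1 m n k (X : 'M[Rg]_(m, n)) (Y : 'M[Rg]_(n, k)) :
  mdiv (X *m Y) = mdiv X *m Y + mb X *m mdiv Y.
Proof.
apply: scal_inj; rewrite scalerDr scalemxAl scalemxAr !mdivP mbM.
by rewrite mulmxBl mulmxBr addrA subrK.
Qed.
Lemma mdivM2 m n k (X : 'M[Rg]_(m, n)) (Y : 'M[Rg]_(n, k)) :
  mdiv (X *m Y) = mdiv X *m mb Y + X *m mdiv Y.
Proof.
apply: scal_inj; rewrite scalerDr scalemxAl scalemxAr !mdivP mbM.
by rewrite mulmxBl mulmxBr [RHS]addrC addrA subrK addrC.
Qed.
Lemma mdiv_comm m n k l (X : 'M[Rg]_(m, n)) (P : 'M[Rg]_(n, k)) (Q : 'M[Rg]_(m, l))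
  (Y : 'M[Rg]_(l, k)) :
  mb X = X -> mb Y = Y -> X *m P = Q *m Y -> X *m mdiv P = mdiv Q *m Y.
Proof. by move=> hX hY h; rewrite -mdiv_mull // -mdiv_mulr // h. Qed.

End Mat.

Lemma htpc_eq p u1 u2 A B (f g : mor A B) : f.1 = g.1 -> f.2 = g.2 -> htpc p u1 u2 f g.
Proof.
move=> e1 e2; exists 0, 0; rewrite e1 e2 !subrr !mulmx0 !mul0mx !addr0; split => //.
- by move=> _ i j; rewrite mxE; exact: qhom0.
- by move=> _ i j; rewrite mxE; exact: qhom0.
Qed.

Lemma graded_div p m n (deg deg' : 'I_m -> 'I_n -> int) (M : 'M[Rg]_(m, n)) :
  graded p deg M -> (forall i j, deg' i j = deg i j - 2) -> graded p deg' (mdiv M).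
Proof. by move=> h e hp i j; rewrite e mxE; apply: divs_qhom; exact: h. Qed.

Lemma sg0_shift p s : sg0 p (skind s, sq s + 2, sz s) = sg0 p s + 2.
Proof. case: s => [[k q] z]; rewrite /sg0 /g0u /g1u /skind /sq /sz /=; case: k; case: z; ring. Qed.
Lemma sg1_shift p s : sg1 p (skind s, sq s + 2, sz s) = sg1 p s + 2.
Proof. case: s => [[k q] z]; rewrite /sg1 /g0u /g1u /skind /sq /sz /=; case: k; case: z; ring. Qed.

Lemma hD0 (u1 u2 : Rg) A : bar u1 = u1 -> bar u2 = u2 -> mb (D0 u1 u2 A) = D0 u1 u2 A.
Proof.
move=> b1 b2; apply/matrixP => i j; rewrite !mxE rmorphMn /=; congr (_ *+ _).
rewrite /sd0; case: (@osumm A i) => [[k q] z]; rewrite /skind /sz /=.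
by case: k; case: z; rewrite ?rmorphN /= ?bar_v1 ?bar_v2 ?b1 ?b2.
Qed.
Lemma hD1 (u1 u2 : Rg) A : bar u1 = u1 -> bar u2 = u2 -> mb (D1 u1 u2 A) = D1 u1 u2 A.
Proof.
move=> b1 b2; apply/matrixP => i j; rewrite !mxE rmorphMn /=; congr (_ *+ _).
rewrite /sd1; case: (@osumm A i) => [[k q] z]; rewrite /skind /sz /=.
by case: k; case: z; rewrite ?rmorphN /= ?bar_v1 ?bar_v2 ?b1 ?b2.
Qed.

Theorem lemma6p2 (p : {poly rat})
  (p_even : forall i : nat, odd i -> p`_i = 0)
  (u1 u2 : {mpoly rat[3]})
  (Hu1 : u1 * v1 = w p) (Hu2 : u2 * v2 = w p) :
  exists del : forall A B : obj, mor A B -> mor A (shift2 B),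
    (* del is an operation on Hom-sets of hmf_2 *)
    (forall A B (phi : mor A B), is_mor p u1 u2 phi ->
       is_mor p u1 u2 (del A B phi)) /\
    (forall A B (phi psi : mor A B), is_mor p u1 u2 phi -> is_mor p u1 u2 psi ->
       htpc p u1 u2 phi psi -> htpc p u1 u2 (del A B phi) (del A B psi)) /\
    (* (1) Z-linearity *)
    (forall A B (phi psi : mor A B), is_mor p u1 u2 phi -> is_mor p u1 u2 psi ->
       htpc p u1 u2 (del A B (madd phi psi)) (madd (del A B phi) (del A B psi))) /\
    (* (2) *)
    (forall A B (phi : mor A B), is_mor p u1 u2 phi ->
       htpc p u1 u2 (msub phi (mbar phi)) (mcomp (fnat B) (del A B phi)) /\
       htpc p u1 u2 (Fm (msub phi (mbar phi))) (mcomp (del A B phi) (fnat A))) /\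
    (* (3) *)
    (forall A B C (phi : mor A B) (psi : mor B C),
       is_mor p u1 u2 phi -> is_mor p u1 u2 psi ->
       htpc p u1 u2 (del A C (mcomp psi phi))
         (madd (mcomp (del B C psi) phi) (mcomp (Fm (mbar psi)) (del A B phi))) /\
       htpc p u1 u2 (del A C (mcomp psi phi))
         (madd (mcomp (del B C psi) (mbar phi)) (mcomp (Fm psi) (del A B phi)))).
Proof.
have bu1 : bar u1 = u1 by apply: (bar_u p_even v1_nz (bar_v1) Hu1).
have bu2 : bar u2 = u2 by apply: (bar_u p_even v2_nz (bar_v2) Hu2).
have E0 := fun A => hD0 A bu1 bu2.
have E1 := fun A => hD1 A bu1 bu2.
exists (fun A B (phi : mor A B) => ((mdiv phi.1, mdiv phi.2) : mor A (shift2 B))).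
split; [|split; [|split; [|split]]].
- move=> A B [f1 f2] [h1 h2 g1 g2]; split => /=.
  + exact: mdiv_comm (E0 _) (E0 _) h1.
  + exact: mdiv_comm (E1 _) (E1 _) h2.
  + eapply graded_div; [exact: g1|] => i j /=; rewrite sg0_shift; ring.
  + eapply graded_div; [exact: g2|] => i j /=; rewrite sg1_shift; ring.
- move=> A B [f1 f2] [g1 g2] _ _ [h0 [h1 [e1 e2 gh0 gh1]]].
  exists (mdiv h0), (mdiv h1); split => /=.
  + by rewrite -mdivB e1 mdivD mdiv_mull ?E1 // mdiv_mulr ?E0.
  + by rewrite -mdivB e2 mdivD mdiv_mull ?E0 // mdiv_mulr ?E1.
  + eapply graded_div; [exact: gh0|] => i j /=; rewrite sg1_shift; ring.
  + eapply graded_div; [exact: gh1|] => i j /=; rewrite sg0_shift; ring.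
- by move=> A B phi psi _ _; apply: htpc_eq => /=; rewrite mdivD.
- move=> A B phi _; split; apply: htpc_eq => /=.
  + by rewrite mul_scalar_mx -[xa + xb]/sx mdivP.
  + by rewrite mul_scalar_mx -[xa + xb]/sx mdivP.
  + by rewrite mul_mx_scalar -[xa + xb]/sx mdivP.
  + by rewrite mul_mx_scalar -[xa + xb]/sx mdivP.
- move=> A B C phi psi _ _; split; apply: htpc_eq => /=.
  + exact: mdivM1.
  + exact: mdivM1.
  + exact: mdivM2.
  + exact: mdivM2.
Qed.
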